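(* Let $t$ be a power of two, let $h:[u]\to[t]$ be a random hash function, let $S\subseteq[u]$ with $|S|<t$ be stored in a linear probing table of size $t$ using $h$, and let $q\in[u]$. Suppose that for each $\ell\in\{0,1,\dots,\log_2 t\}$ there is a number $P_\ell$ such that for every $y\in[t]$ and every $\ell$-interval $I$, \[\Pr\Big[\,|\{x\in S\setminus\{q\}: h(x)\in I\}|\ge \tfrac34 2^\ell \;\Big|\; h(q)=y\Big]\le P_\ell.\] Then the expected number of positions from $h(q)$ up to the first empty position at or after $h(q)$ (and hence the expected time to search, insert or delete $q$) is \[O\Big(1+\sum_{\ell=0}^{\log_2 t}2^\ell P_\ell\Big),\] where the constant in the $O$ is absolute.
   Context: Let $[s]=\{0,\dots,s-1\}$. Linear probing: a table of size $t$ with hash function $h:[u]\to[t]$; positions are indexed by nonnegative integers (wrap-around ignored), each either empty or holding one key. Keys of $S$ are inserted starting from an empty table; a key $x$ is inserted by scanning positions $h(x),h(x)+1,\dots$ and placing $x$ in the first empty one. Search, insertion and deletion of a key $x$ take time at most proportional to the number of positions from $h(x)$ to the first empty position at or after $h(x)$. For an integer $\ell\ge0$, an $\ell$-interval is a set of positions $[i2^\ell,(i+1)2^\ell)$ for an integer $i\ge0$. *)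

(* Defs.v *)
From HB Require Import structures.
From mathcomp Require Import all_boot all_order all_algebra.
Set Implicit Arguments. Unset Strict Implicit. Unset Printing Implicit Defensive.
Import Order.TTheory GRing.Theory Num.Theory.

(* ---------- Linear probing (positions are nats, no wrap-around) ---------- *)

(* Among the (size occ).+1 positions
   i, ..., i + size occ at least one is free, so the search range suffices. *)
Definition first_empty (occ : seq nat) (i : nat) : nat :=
  i + find (fun p => p \notin occ) (iota i (size occ).+1).

Definition lp_insert (u t : nat) (h : 'I_u -> 'I_t) (occ : seq nat) (x : 'I_u)
  : seq nat := rcons occ (first_empty occ (h x)).

Definition lp_table (u t : nat) (h : 'I_u -> 'I_t) (s : seq 'I_u) : seq nat :=
  foldl (lp_insert h) [::] s.

Definition probe_len (u t : nat) (h : 'I_u -> 'I_t) (s : seq 'I_u) (q : 'I_u)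
  : nat := first_empty (lp_table h s) (h q) - h q + 1.

Local Open Scope ring_scope.

Definition Pr (R : realFieldType) (T : finType) (mu : T -> R) (A : pred T) : R :=
  \sum_(w | A w) mu w.

Definition condPr (R : realFieldType) (T : finType) (mu : T -> R)
  (A B : pred T) : R := Pr mu (predI A B) / Pr mu B.

Definition expect (R : realFieldType) (T : finType) (mu : T -> R) (X : T -> nat)
  : R := \sum_w mu w * (X w)%:R.

Definition is_distr (R : realFieldType) (T : finType) (mu : T -> R) : Prop :=
  (forall w, 0 <= mu w) /\ \sum_w mu w = 1.

Definition load_in (u t : nat) (h : 'I_u -> 'I_t) (s : seq 'I_u) (q : 'I_u)
  (l i : nat) : nat :=
  count (fun x => (x != q) && (i * 2 ^ l <= h x < i.+1 * 2 ^ l)%N) s.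

(* Main.v *)
Require Import Defs.
From HB Require Import structures.
From mathcomp Require Import all_boot all_order all_algebra.
From mathcomp Require Import zify ring.
Import Order.TTheory GRing.Theory Num.Theory.
Section LP.
Variables (u t : nat) (h : 'I_u -> 'I_t).

Lemma fe_notin o i : first_empty o i \notin o.
Proof.
rewrite /first_empty.
set a := (fun p => p \notin o).
have Hhas : has a (iota i (size o).+1).
  apply/negPn/negP => /hasPn H.
  have : size (iota i (size o).+1) <= size o.
    apply: uniq_leq_size; first exact: iota_uniq.
    by move=> p /H; rewrite /a negbK.
  by rewrite size_iota ltnn.
have := nth_find 0 Hhas.
rewrite nth_iota; first by []. by move: Hhas; rewrite has_find size_iota.
Qed.

Lemma fe_ge o i : i <= first_empty o i.
Proof. by rewrite /first_empty leq_addr. Qed.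

Lemma fe_before o i p : i <= p < first_empty o i -> p \in o.
Proof.
rewrite /first_empty => /andP [H1 H2].
have Hp : p - i < find (fun p => p \notin o) (iota i (size o).+1) by lia.
have := before_find 0 Hp.
have Hs : p - i < (size o).+1.
  apply: (leq_trans Hp); by have := find_size (fun p => p \notin o) (iota i (size o).+1); rewrite size_iota.
rewrite nth_iota // subnKC //.
by move/negbFE.
Qed.

Lemma lp_table_rcons s x :
  lp_table h (rcons s x) = rcons (lp_table h s) (first_empty (lp_table h s) (h x)).
Proof. by rewrite /lp_table foldl_rcons. Qed.

Lemma lp_uniq s : uniq (lp_table h s).
Proof.
elim/last_ind: s => [|s x IH]; first by [].
by rewrite lp_table_rcons rcons_uniq IH fe_notin.
Qed.

Lemma lp_size s : size (lp_table h s) = size s.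
Proof.
elim/last_ind: s => [|s x IH]; first by [].
by rewrite lp_table_rcons !size_rcons IH.
Qed.

Lemma lp_count s a e : (a = 0 \/ a.-1 \notin lp_table h s) ->
  count (fun p => a <= p < e) (lp_table h s) <= count (fun x => a <= h x < e) s.
Proof.
elim/last_ind: s => [|s x IH]; first by [].
rewrite lp_table_rcons -!cats1 !count_cat /= !addn0 => Ha.
set o := lp_table h s in IH Ha *.
set p := first_empty o (h x).
have Ha' : a = 0 \/ a.-1 \notin o.
  case: Ha => [->|]; [by left | rewrite mem_cat mem_seq1 negb_or => /andP[-> _]; by right].
apply: leq_add; first exact: IH.
case: (boolP (a <= p < e)) => //= /andP [H1 H2].
have Hxp : h x <= p by exact: fe_ge.
have -> : h x < e by exact: leq_ltn_trans Hxp H2.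
rewrite andbT.
case: (leqP a (h x)) => // Hlt.
exfalso.
have Hin : a.-1 \in o.
  apply: (fe_before o (h x)); rewrite /p in H1; apply/andP; split; lia.
case: Ha => [Ha0|]; first lia.
by rewrite mem_cat Hin.
Qed.
End LP.
Lemma run_start (o : seq nat) y : exists a, a <= y /\ (a = 0 \/ a.-1 \notin o) /\
  (forall p, a <= p < y -> p \in o).
Proof.
elim: y => [|y [a [H1 [H2 H3]]]].
  by exists 0; split=> //; split; [left | move=> p; lia].
case: (boolP (y \in o)) => Hy.
  exists a; split; first lia; split=> // p Hp.
  case: (ltnP p y) => Hpy; first by apply: H3; lia.
  by have -> : p = y by lia.
exists y.+1; split=> //; split; [by right | move=> p; lia].
Qed.

Lemma count_split (T : Type) (P : pred T) (f : T -> nat) lo mid hi s :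
  lo <= mid <= hi ->
  count (fun x => P x && (lo <= f x < hi)) s =
  count (fun x => P x && (lo <= f x < mid)) s + count (fun x => P x && (mid <= f x < hi)) s.
Proof.
move=> H; elim: s => //= x s ->.
case: (P x) => /=; last lia.
case: (leqP lo (f x)); case: (ltnP (f x) hi); case: (ltnP (f x) mid); case: (leqP mid (f x)); lia.
Qed.

Lemma count_blocks (T : Type) (P : pred T) (f : T -> nat) c m N s :
  count (fun x => P x && (c * m <= f x < (c + N) * m)) s =
  \sum_(j < N) count (fun x => P x && ((c + j) * m <= f x < (c + j).+1 * m)) s.
Proof.
elim: N => [|N IH].
  rewrite big_ord0 addn0; elim: s => //= x s ->; case: (P x); case: (leqP (c * m) (f x)); lia.
rewrite big_ord_recr /= -IH (@count_split _ _ _ _ ((c + N) * m)) ?addnS //.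
apply/andP; split; apply: leq_mul => //; lia.
Qed.

Lemma sum_bound (L : nat -> nat) M N :
  (forall j, j < N -> 4 * L j < M) -> 4 * \sum_(j < N) L j + N <= N * M.
Proof.
elim: N => [|N IH] H; first by rewrite big_ord0.
rewrite big_ord_recr /=.
have := IH (fun j Hj => H j (ltnW Hj)); have := H N (ltnSn N).
move=> H1 H2; rewrite [N.+1 * M]mulSn. set S := \sum_(i < N) L i in H2 *. lia.
Qed.
Lemma pointwise u k (h : 'I_u -> 'I_(2 ^ k)) (s : seq 'I_u) q :
  uniq s -> size s < 2 ^ k ->
  probe_len h s q <= 8 + \sum_(l < k.+1) 2 ^ (l + 4) *
     \sum_(j < 35) (3 * 2 ^ l <= 4 * load_in h s q l (h q %/ 2 ^ l - 17 + j)).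
Proof.
move=> Hu Hs.
set o := lp_table h s.
set y := nat_of_ord (h q).
set e := first_empty o y.
have Hye : y <= e by exact: fe_ge.
have [a [Hay [Ha0 Hay2]]] := run_start o y.
have Hall : forall p, a <= p < e -> p \in o.
  move=> p Hp; case: (ltnP p y) => Hpy; first by apply: Hay2; lia.
  by apply: (fe_before o y); lia.
set D := e - a.
have HD1 : D <= count (fun p => a <= p < e) o.
  rewrite -size_filter.
  have := @uniq_leq_size _ (iota a (e - a)) (filter (fun p => a <= p < e) o) (iota_uniq _ _).
  rewrite size_iota; apply => p; rewrite mem_iota mem_filter => Hp.
  apply/andP; split; first lia; apply: Hall; lia.
have HDk : D < 2 ^ k.
  have := count_size (fun p => a <= p < e) o.
  have -> : size o = size s by exact: lp_size.
  lia.
have HD2 : D <= 1 + count (fun x => (x != q) && (a <= h x < e)) s.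
  apply: (leq_trans HD1); apply: (leq_trans (@lp_count _ _ h s a e Ha0)).
  have Hq : count (pred1 q) s <= 1 by rewrite count_uniq_mem //; case: (q \in s).
  apply: leq_trans (leq_add Hq (leqnn _)).
  elim: (s) => //= x s' IH.
  case: (eqVneq x q) => /= _; lia.
have Hpl : probe_len h s q <= D + 1 by rewrite /probe_len -/o -/y -/e; lia.
case: (ltnP D 8) => HD8; first lia.
set tl := trunc_log 2 D.
have Htl1 : 2 ^ tl <= D by apply: trunc_logP; lia.
have Htl2 : D < 2 ^ tl.+1 by apply: trunc_log_ltn.
have Htl3 : 3 <= tl.
  case: (leqP 3 tl) => // H; exfalso.
  have : 2 ^ tl.+1 <= 2 ^ 3 by rewrite leq_exp2l.
  lia.
set l := tl - 3.
set m := 2 ^ l.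
have Hm : 0 < m by rewrite expn_gt0.
have Hm8 : 2 ^ tl = 8 * m by rewrite /m -(expnD 2 3 l); congr (2 ^ _); lia.
have Hm16 : 2 ^ tl.+1 = 16 * m by rewrite expnS Hm8; lia.
rewrite Hm8 in Htl1; rewrite Hm16 in Htl2.
have Hlk : l < k.+1.
  have : 2 ^ (l + 3) < 2 ^ k.
    rewrite expnD -/m; lia.
  rewrite ltn_exp2l //; lia.
set i0 := a %/ m.
set q0 := D %/ m.
set N := q0 + 2.
set Y := y %/ m.
have F1 : i0 * m <= a by exact: leq_divM.
have F2 : a < i0.+1 * m by exact: ltn_ceil.
have F3 : q0 * m <= D by exact: leq_divM.
have F4 : D < q0.+1 * m by exact: ltn_ceil.
have F5 : Y * m <= y by exact: leq_divM.
have F6 : i0 <= Y by exact: leq_div2r.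
have F7 : 7 < q0.
  have : 8 * m < q0.+1 * m by lia.
  by rewrite ltn_mul2r; case/andP.
have F8 : q0 < 16.
  have : q0 * m < 16 * m by lia.
  by rewrite ltn_mul2r; case/andP.
have F9 : Y < i0 + 17.
  have : Y * m < (i0 + 17) * m by rewrite mulnDl; rewrite mulSn in F2; lia.
  by rewrite ltn_mul2r; case/andP.
have [j [Hj Hload]] : exists j, j < N /\ 3 * m <= 4 * load_in h s q l (i0 + j).
  case: (boolP [exists j : 'I_N, 3 * m <= 4 * load_in h s q l (i0 + j)]).
    by move=> /existsP [j Hj]; exists j.
  move=> /existsPn Hno; exfalso.
  have Hb := @sum_bound (fun j => load_in h s q l (i0 + j)) (3 * m) N.
  have Hb' : 4 * \sum_(j < N) load_in h s q l (i0 + j) + N <= N * (3 * m).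
    apply: Hb => j Hj; have := Hno (Ordinal Hj); rewrite /= -ltnNge; lia.
  have Hcb := @count_blocks _ (fun x => x != q) (fun x => nat_of_ord (h x)) i0 m N s.
  have Hsub : count (fun x => (x != q) && (a <= h x < e)) s <=
              count (fun x => (x != q) && (i0 * m <= h x < (i0 + N) * m)) s.
    apply: sub_count => x /= /andP [-> Hx] /=.
    have : (i0 + N) * m = i0 * m + q0 * m + 2 * m by rewrite /N !mulnDl addnA.
    rewrite mulSn in F2; lia.
  have HS : \sum_(j < N) load_in h s q l (i0 + j) =
            count (fun x => (x != q) && (i0 * m <= h x < (i0 + N) * m)) s by rewrite Hcb.
  have HNm : N * (3 * m) = 3 * (q0 * m) + 6 * m by rewrite /N; nia.
  move: Hb'; rewrite HS HNm; lia.
have Hj35 : i0 + j - (Y - 17) < 35 by lia.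
have HjY : Y - 17 + (i0 + j - (Y - 17)) = i0 + j by lia.
apply: (leq_trans Hpl); apply: leq_trans (leq_addl 8 _).
rewrite (bigD1 (Ordinal Hlk)) //=; apply: leq_trans (leq_addr _ _).
rewrite (bigD1 (Ordinal Hj35)) //= -/m -/y -/Y HjY Hload.
have -> : 2 ^ (l + 4) = 16 * m by rewrite expnD mulnC.
rewrite mulnDr; lia.
Qed.
Local Open Scope ring_scope.
Lemma Pr_ge0 (R : realFieldType) (T : finType) (mu : T -> R) (A : pred T) :
  (forall w, 0 <= mu w) -> 0 <= Pr mu A.
Proof. by move=> H; rewrite /Pr; apply: sumr_ge0. Qed.

Lemma Pr_sub (R : realFieldType) (T : finType) (mu : T -> R) (A B : pred T) :
  (forall w, 0 <= mu w) -> Pr mu (predI A B) <= Pr mu B.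
Proof.
move=> H; rewrite /Pr [X in _ <= X]big_mkcond [X in X <= _]big_mkcond /=.
apply: ler_sum => w _; case: (A w); case: (B w) => //=.
Qed.

Lemma key (R : realFieldType) u k (mu : {ffun 'I_u -> 'I_(2 ^ k)} -> R)
  (s : seq 'I_u) (q : 'I_u) (P : nat -> R) (l j : nat) :
  is_distr mu -> (l <= k)%N ->
  (forall (y : 'I_(2 ^ k)) (i : nat),
         0 < Pr mu (fun h => h q == y) ->
         condPr mu
           (fun h => (3 * 2 ^ l <= 4 * load_in h s q l i)%N)
           (fun h => h q == y) <= P l) ->
  \sum_h mu h * ((3 * 2 ^ l <= 4 * load_in h s q l (h q %/ 2 ^ l - 17 + j))%N)%:R
    <= P l.
Proof.
move=> [Hmu0 Hmu1] Hlk Hc.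
set A := fun (y : 'I_(2 ^ k)) (h : {ffun 'I_u -> 'I_(2 ^ k)}) =>
  (3 * 2 ^ l <= 4 * load_in h s q l (y %/ 2 ^ l - 17 + j))%N.
have E1 : forall h : {ffun 'I_u -> 'I_(2 ^ k)},
  mu h * ((3 * 2 ^ l <= 4 * load_in h s q l (h q %/ 2 ^ l - 17 + j))%N)%:R =
  \sum_y (if A y h && (h q == y) then mu h else 0).
  move=> h; rewrite (bigD1 (h q)) //= eqxx andbT big1 ?addr0.
    by rewrite /A; case: ifP; rewrite ?mulr1 ?mulr0.
  by move=> y Hy; rewrite eq_sym (negbTE Hy) andbF.
rewrite (eq_bigr _ (fun h _ => E1 h)) exchange_big /=.
have E2 : forall y : 'I_(2 ^ k),
  \sum_h (if A y h && (h q == y) then mu h else 0) = Pr mu (predI (A y) (fun h => h q == y)).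
  by move=> y; rewrite /Pr [RHS]big_mkcond.
rewrite (eq_bigr _ (fun y _ => E2 y)).
have E3 : \sum_(y : 'I_(2 ^ k)) Pr mu (fun h => h q == y) = 1.
  rewrite /Pr (eq_bigr (fun y => \sum_(h : {ffun 'I_u -> 'I_(2 ^ k)}) (if h q == y then mu h else 0))); last first.
    by move=> y _; rewrite big_mkcond.
  rewrite exchange_big /= -Hmu1; apply: eq_bigr => h _.
  rewrite (bigD1 (h q)) //= eqxx big1 ?addr0 // => y Hy.
  by rewrite eq_sym (negbTE Hy).
apply: (@le_trans _ _ (\sum_(y : 'I_(2 ^ k)) P l * Pr mu (fun h => h q == y))).
  apply: ler_sum => y _.
  have HB := @Pr_ge0 _ _ mu (fun h => h q == y) Hmu0.
  case: (ltrP 0 (Pr mu (fun h => h q == y))) => HBp.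
    have := Hc y (y %/ 2 ^ l - 17 + j)%N HBp.
    by rewrite /condPr ler_pdivrMr // mulrC.
  have HB0 : Pr mu (fun h => h q == y) = 0 by apply/eqP; rewrite eq_le HBp HB.
  rewrite HB0 mulr0; rewrite -HB0; exact: Pr_sub.
by rewrite -mulr_sumr E3 mulr1.
Qed.
Theorem theorem4 :
  exists C : nat,
  forall (R : realFieldType) (u k : nat)
         (mu : {ffun 'I_u -> 'I_(2 ^ k)} -> R)
         (s : seq 'I_u) (q : 'I_u) (P : nat -> R),
    is_distr mu ->
    uniq s ->
    (size s < 2 ^ k)%N ->
    (forall (l : nat), (l <= k)%N ->
       forall (y : 'I_(2 ^ k)) (i : nat),
         0 < Pr mu (fun h => h q == y) ->
         condPr mu
           (fun h => (3 * 2 ^ l <= 4 * load_in h s q l i)%N)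
           (fun h => h q == y) <= P l) ->
    expect mu (fun h => probe_len h s q)
      <= C%:R * (1 + \sum_(l < k.+1) 2%:R ^+ l * P l).
Proof.
exists 560%N => R u k mu s q P Hd Hu Hs Hc.
have [Hmu0 Hmu1] := Hd.
set ind := fun (h : {ffun 'I_u -> 'I_(2 ^ k)}) (l j : nat) =>
  (3 * 2 ^ l <= 4 * load_in h s q l (h q %/ 2 ^ l - 17 + j))%N.
rewrite /expect.
apply: (@le_trans _ _ (\sum_h (mu h * 8%:R +
   \sum_(l < k.+1) (2 ^ (l + 4))%:R * \sum_(j < 35) mu h * (ind h l j)%:R))).
  apply: ler_sum => h _.
  have Hp : (probe_len h s q)%:R <= (8%:R : R) +
     \sum_(l < k.+1) (2 ^ (l + 4))%:R * \sum_(j < 35) (ind h l j)%:R.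
    have := @pointwise _ _ h s q Hu Hs; rewrite -(ler_nat R) natrD natr_sum => H.
    apply: (le_trans H); rewrite lerD2l; rewrite le_eqVlt; apply/orP; left; apply/eqP; apply: eq_bigr => l _.
    by rewrite natrM natr_sum.
  apply: (le_trans (ler_wpM2l (Hmu0 h) Hp)).
  rewrite mulrDr lerD2l mulr_sumr; rewrite le_eqVlt; apply/orP; left; apply/eqP; apply: eq_bigr => l _.
  by rewrite mulrCA mulr_sumr.
rewrite big_split /= -mulr_suml Hmu1 mul1r exchange_big /=.
apply: (@le_trans _ _ (8%:R + \sum_(l < k.+1) (2 ^ (l + 4))%:R * (P l *+ 35))).
  rewrite lerD2l; apply: ler_sum => l _.
  rewrite -mulr_sumr; apply: ler_wpM2l; first exact: ler0n.
  rewrite exchange_big /=.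
  apply: (@le_trans _ _ (\sum_(j < 35) P l)); last by rewrite sumr_const card_ord.
  apply: ler_sum => j _.
  apply: (@key R u k mu s q P l j Hd (ltn_ord l) (Hc l (ltn_ord l))).
rewrite mulrDr mulr1 mulr_sumr lerD ?ler_nat //; rewrite le_eqVlt; apply/orP; left.
apply/eqP; apply: eq_bigr => l _.
have -> : (2 ^ (l + 4))%N = (2 ^ l * 16)%N by rewrite expnD.
rewrite natrM natrX -mulr_natr.
have -> : (560%:R : R) = 16%:R * 35%:R by rewrite -natrM.
ring.
Qed.
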